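(* The hybrid logic $\mathbf{IB(@)}$ is decidable; that is, the set of hybrid formulas $\varphi$ such that $\mathcal{M},w\models\varphi$ for every orthomodel $\mathcal{M}$ and every world $w$ of $\mathcal{M}$ is decidable.
   Context: Hybrid language: fix disjoint countably infinite sets $\mathbf{Prop}$ (propositional variables) and $\mathbf{Nom}$ (nominals). Formulas: $\varphi ::= p \mid i \mid \neg\varphi \mid \varphi\land\varphi \mid \Diamond\varphi \mid @_i\varphi$ with $p\in\mathbf{Prop}$, $i\in\mathbf{Nom}$. A model $\mathcal{M}=(W,R,V)$ has $W$ nonempty, $R\subseteq W\times W$, and $V:\mathbf{Prop}\cup\mathbf{Nom}\to\mathcal{P}(W)$ with $V(i)=\{i^V\}$ a singleton for each nominal $i$. Satisfaction: $\mathcal{M},w\models p$ iff $w\in V(p)$; $\mathcal{M},w\models i$ iff $w=i^V$; Boolean clauses as usual; $\mathcal{M},w\models\Diamond\varphi$ iff there is $v$ with $wRv$ and $\mathcal{M},v\models\varphi$; $\mathcal{M},w\models @_i\varphi$ iff $\mathcal{M},i^V\models\varphi$. An orthoframe is a pair $(W,R)$ with $R$ irreflexive and symmetric; an orthomodel is a model whose frame is an orthoframe. $\mathbf{IB(@)}$ is the hybrid logic of the class of all orthoframes (axiomatized by the basic hybrid logic $\mathbf{K(@)}$ plus $@_i\neg\Diamond i$ and $@_i\neg\Diamond\neg\Diamond i$). *)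

(* Defs.v *)
From Stdlib Require Import List Arith.
Import ListNotations.

Inductive form : Type :=
| PVar : nat -> form
| Nom  : nat -> form
| Neg  : form -> form
| And  : form -> form -> form
| Dia  : form -> form
| At   : nat -> form -> form.

(** * Satisfaction.  A model (W,R,V) is given by [R], the valuation [V] of
    propositional variables, and for nominals the function [N] with
    V(i) = {N i} (i.e. N i = i^V). *)
Fixpoint sat {W : Type} (R : W -> W -> Prop) (V : nat -> W -> Prop)
         (N : nat -> W) (w : W) (phi : form) : Prop :=
  match phi with
  | PVar p => V p w
  | Nom i => w = N i
  | Neg a => ~ sat R V N w a
  | And a b => sat R V N w a /\ sat R V N w b
  | Dia a => exists v, R w v /\ sat R V N v a
  | At i a => sat R V N (N i) a
  end.

Definition orthoframe {W : Type} (R : W -> W -> Prop) : Prop :=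
  (forall w, ~ R w w) /\ (forall w v, R w v -> R v w).

Definition IB_valid (phi : form) : Prop :=
  forall (W : Type) (R : W -> W -> Prop) (V : nat -> W -> Prop) (N : nat -> W),
    orthoframe R -> forall w : W, sat R V N w phi.

(** * Goedel numbering of formulas (Cantor pairing). *)
Definition pair (a b : nat) : nat := (a + b) * (a + b + 1) / 2 + b.

Fixpoint code (phi : form) : nat :=
  match phi with
  | PVar p => pair 0 p
  | Nom i => pair 1 i
  | Neg a => pair 2 (code a)
  | And a b => pair 3 (pair (code a) (code b))
  | Dia a => pair 4 (code a)
  | At i a => pair 5 (pair i (code a))
  end.

Inductive recf : Type :=
| RZero : recf
| RSucc : recf
| RProj : nat -> recf
| RComp : recf -> list recf -> recf
| RPrec : recf -> recf -> recf
| RMu   : recf -> recf.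

Inductive ev : recf -> list nat -> nat -> Prop :=
| ev_zero : forall v, ev RZero v 0
| ev_succ : forall x v, ev RSucc (x :: v) (S x)
| ev_proj : forall i v, i < length v -> ev (RProj i) v (nth i v 0)
| ev_comp : forall f gs v ws y, evs gs v ws -> ev f ws y -> ev (RComp f gs) v y
| ev_prec0 : forall f g v y, ev f v y -> ev (RPrec f g) (0 :: v) y
| ev_precS : forall f g n v y z,
    ev (RPrec f g) (n :: v) y -> ev g (n :: y :: v) z ->
    ev (RPrec f g) (S n :: v) z
| ev_mu : forall f v n,
    ev f (n :: v) 0 ->
    (forall m, m < n -> exists k, ev f (m :: v) (S k)) ->
    ev (RMu f) v n
with evs : list recf -> list nat -> list nat -> Prop :=
| evs_nil : forall v, evs [] v []
| evs_cons : forall g gs v y ys, ev g v y -> evs gs v ys -> evs (g :: gs) v (y :: ys).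

Definition decidable_form_set (P : form -> Prop) : Prop :=
  exists f : recf, forall phi : form,
    (P phi -> ev f [code phi] 0) /\ (~ P phi -> ev f [code phi] 1).

(* Main.v *)
Require Import Defs.
From Stdlib Require Import List Arith Lia Bool Classical ClassicalEpsilon.
Import ListNotations.
Open Scope bool_scope.


Fixpoint eval (f : recf) (v : list nat) {struct f} : nat :=
  match f with
  | RZero => 0
  | RSucc => S (hd 0 v)
  | RProj i => nth i v 0
  | RComp h gs => eval h ((fix evl (gs : list recf) : list nat :=
        match gs with [] => [] | g :: gs' => eval g v :: evl gs' end) gs)
  | RPrec a b => match v with
                 | [] => 0
                 | x :: w => nat_rec (fun _ => nat) (eval a w) (fun k y => eval b (k :: y :: w)) x
                 end
  | RMu _ => 0
  end.

Fixpoint okb (f : recf) (n : nat) {struct f} : bool :=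
  match f with
  | RZero => true
  | RSucc => 0 <? n
  | RProj i => i <? n
  | RComp h gs => okb h (length gs) &&
      (fix okl (gs : list recf) : bool := match gs with [] => true | g :: gs' => okb g n && okl gs' end) gs
  | RPrec a b => (0 <? n) && okb a (n - 1) && okb b (S n)
  | RMu _ => false
  end.

Lemma recf_ind' (P : recf -> Prop) :
  P RZero -> P RSucc -> (forall i, P (RProj i)) ->
  (forall h gs, P h -> Forall P gs -> P (RComp h gs)) ->
  (forall a b, P a -> P b -> P (RPrec a b)) -> (forall a, P a -> P (RMu a)) ->
  forall f, P f.
Proof.
  intros H0 H1 H2 H3 H4 H5. fix IH 1. intros [ | | i | h gs | a b | a].
  - exact H0. - exact H1. - apply H2.
  - apply H3. apply IH.
    exact ((fix F (l : list recf) : Forall P l := match l with [] => Forall_nil P | g :: l' => Forall_cons g (IH g) (F l') end) gs).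
  - apply H4; apply IH.
  - apply H5; apply IH.
Qed.

Lemma ok_ev : forall f v, okb f (length v) = true -> ev f v (eval f v).
Proof.
  induction f using recf_ind'; intros v Hok; simpl in *.
  - constructor.
  - destruct v as [|x v]; simpl in Hok; [discriminate|]. constructor.
  - apply Nat.ltb_lt in Hok. constructor; auto.
  - apply andb_prop in Hok as [Hh Hgs].
    set (ws := (fix evl (gs : list recf) : list nat :=
        match gs with [] => [] | g :: gs' => eval g v :: evl gs' end) gs).
    apply ev_comp with (ws := ws).
    + subst ws. clear Hh IHf. induction H; simpl in *.
      * constructor.
      * apply andb_prop in Hgs as [Hx Hl]. constructor; auto.
    + apply IHf. subst ws. clear -Hh. replace (length _) with (length gs); auto.
      clear Hh. induction gs; simpl; auto.
  - destruct v as [|x w]; [discriminate|]. simpl in Hok.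
    apply andb_prop in Hok as [Ha Hb].
    replace (length w - 0) with (length w) in Ha by lia.
    induction x; simpl.
    + constructor. auto.
    + econstructor. apply IHx. apply IHf2. simpl. auto.
  - discriminate.
Qed.

Lemma eval_comp h gs v : eval (RComp h gs) v = eval h (map (fun g => eval g v) gs).
Proof. simpl. f_equal. Qed.

Definition cst (k : nat) : recf := Nat.iter k (fun g => RComp RSucc [g]) RZero.
Lemma eval_cst k v : eval (cst k) v = k.
Proof. induction k; simpl; auto. Qed.
Global Opaque cst.

Definition addp := RPrec (RProj 0) (RComp RSucc [RProj 1]).
Lemma eval_add a b : eval addp [a; b] = a + b.
Proof. induction a; simpl in *; auto. Qed.
Global Opaque addp.
Definition mulp := RPrec RZero (RComp addp [RProj 1; RProj 2]).
Lemma eval_mul a b : eval mulp [a; b] = a * b.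
Proof. induction a; simpl in *; auto. rewrite eval_add. simpl in IHa. rewrite IHa. lia. Qed.
Global Opaque mulp.
Definition predp := RPrec RZero (RProj 0).
Lemma eval_pred a : eval predp [a] = Nat.pred a.
Proof. destruct a; reflexivity. Qed.
Global Opaque predp.
Definition subrp := RPrec (RProj 0) (RComp predp [RProj 1]).
Definition subp := RComp subrp [RProj 1; RProj 0].
Lemma eval_sub a b : eval subp [a; b] = a - b.
Proof.
  simpl. induction b; simpl in *. lia. rewrite IHb. rewrite eval_pred. lia.
Qed.
Global Opaque subp subrp.
Definition condp := RPrec (RProj 0) (RProj 3).
Lemma eval_cond a b c : eval condp [a; b; c] = match a with 0 => b | S _ => c end.
Proof. destruct a; reflexivity. Qed.
Global Opaque condp.
Definition oddp := RPrec RZero (RComp subp [cst 1; RProj 1]).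
Lemma eval_odd a : eval oddp [a] = Nat.b2n (Nat.odd a).
Proof.
  induction a; simpl in *; auto. rewrite eval_cst, eval_sub. rewrite IHa.
  rewrite Nat.odd_succ, <- Nat.negb_odd. destruct (Nat.odd a); reflexivity.
Qed.
Global Opaque oddp.
Lemma div2_S a : Nat.div2 (S a) = Nat.div2 a + Nat.b2n (Nat.odd a).
Proof.
  rewrite (Nat.div2_odd a) at 1.
  destruct (Nat.odd a); simpl Nat.b2n.
  - replace (S (2 * Nat.div2 a + 1)) with (2 * S (Nat.div2 a)) by lia. rewrite Nat.div2_double. lia.
  - replace (S (2 * Nat.div2 a + 0)) with (S (2 * Nat.div2 a)) by lia. rewrite Nat.div2_succ_double. lia.
Qed.
Definition div2p := RPrec RZero (RComp addp [RProj 1; RComp oddp [RProj 0]]).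
Lemma eval_div2 a : eval div2p [a] = Nat.div2 a.
Proof.
  induction a. reflexivity. rewrite div2_S. simpl in *. rewrite eval_odd, eval_add, IHa. reflexivity.
Qed.
Global Opaque div2p.
Definition pow2p := RPrec (cst 1) (RComp addp [RProj 1; RProj 1]).
Lemma eval_pow2 a : eval pow2p [a] = 2 ^ a.
Proof. induction a; simpl in *; auto. rewrite eval_add, IHa. lia. Qed.
Global Opaque pow2p.
Definition itdp := RPrec (RProj 0) (RComp div2p [RProj 1]).
Definition tbp := RComp oddp [RComp itdp [RProj 1; RProj 0]].
Lemma testbit_iter a m : Nat.testbit a m = Nat.odd (Nat.iter m Nat.div2 a).
Proof.
  revert a; induction m; intros a; simpl; auto.
  rewrite IHm. rewrite <- Nat.iter_succ_r. reflexivity.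
Qed.
Lemma eval_tb a m : eval tbp [a; m] = Nat.b2n (Nat.testbit a m).
Proof.
  simpl. rewrite testbit_iter. rewrite <- eval_odd. f_equal. f_equal.
  induction m; simpl in *; auto. rewrite IHm, eval_div2. reflexivity.
Qed.
Global Opaque tbp itdp.

Definition projs k n := map RProj (seq k n).
Lemma map_projs : forall v k l, length l = k ->
  map (fun g => eval g (l ++ v)) (projs k (length v)) = v.
Proof.
  induction v as [|x v IH]; intros k l Hl; simpl; auto.
  unfold projs in *. simpl. f_equal.
  - rewrite app_nth2 by lia. replace (k - length l) with 0 by lia. reflexivity.
  - specialize (IH (S k) (l ++ [x])). rewrite <- app_assoc in IH. apply IH.
    rewrite length_app. simpl. lia.
Qed.
Lemma map_projs0 v : map (fun g => eval g v) (projs 0 (length v)) = v.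
Proof. apply (map_projs v 0 []). reflexivity. Qed.

Definition loop n B I S := RComp (RPrec I S) (B :: projs 0 n).
Lemma eval_loop n B I S v : length v = n ->
  eval (loop n B I S) v = nat_rec (fun _ => nat) (eval I v) (fun k y => eval S (k :: y :: v)) (eval B v).
Proof.
  intros <-. unfold loop. rewrite eval_comp. simpl map. rewrite map_projs0. reflexivity.
Qed.
Definition sh n P := RComp P (RProj 0 :: projs 2 n).
Lemma eval_sh n P k y v : length v = n -> eval (sh n P) (k :: y :: v) = eval P (k :: v).
Proof.
  intros <-. unfold sh. rewrite eval_comp. simpl map. f_equal. f_equal.
  apply (map_projs v 2 [k; y]). reflexivity.
Qed.
Global Opaque loop sh.

Fixpoint bfa n (f : nat -> bool) := match n with 0 => true | S n => bfa n f && f n end.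
Fixpoint bex n (f : nat -> bool) := match n with 0 => false | S n => bex n f || f n end.
Fixpoint enc n (f : nat -> bool) := match n with 0 => 0 | S n => enc n f + 2 ^ n * Nat.b2n (f n) end.
Fixpoint lastf n (f : nat -> bool) := match n with 0 => 0 | S n => if f n then n else lastf n f end.

Definition orp := RComp condp [RProj 0; RProj 1; cst 1].
Lemma eval_or a b : eval orp [Nat.b2n a; Nat.b2n b] = Nat.b2n (a || b).
Proof. unfold orp. rewrite eval_comp. simpl map. rewrite eval_cst, eval_cond. destruct a, b; reflexivity. Qed.
Global Opaque orp.

Definition bforp n B P := loop n B (cst 1) (RComp mulp [RProj 1; sh n P]).
Definition bexp n B P := loop n B (cst 0) (RComp orp [RProj 1; sh n P]).
Definition encp n B P := loop n B (cst 0) (RComp addp [RProj 1; RComp mulp [RComp pow2p [RProj 0]; sh n P]]).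
Definition lastp n B P := loop n B (cst 0) (RComp condp [sh n P; RProj 1; RProj 0]).

Lemma nat_rec_S' (P : nat -> Set) i s m : nat_rec P i s (S m) = s m (nat_rec P i s m).
Proof. reflexivity. Qed.

Section Comb.
Variables (n : nat) (B P : recf) (v : list nat) (f : nat -> bool).
Hypothesis Hv : length v = n.
Hypothesis HP : forall k, eval P (k :: v) = Nat.b2n (f k).

Lemma eval_bfor : eval (bforp n B P) v = Nat.b2n (bfa (eval B v) f).
Proof.
  unfold bforp. rewrite eval_loop by auto. induction (eval B v).
  - apply eval_cst.
  - rewrite nat_rec_S'. rewrite IHn0. cbv beta. rewrite eval_comp. cbn [map eval nth]. rewrite eval_sh, HP, eval_mul by auto.
    cbn [bfa]. destruct (bfa n0 f), (f n0); reflexivity.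
Qed.
Lemma eval_bex : eval (bexp n B P) v = Nat.b2n (bex (eval B v) f).
Proof.
  unfold bexp. rewrite eval_loop by auto. induction (eval B v).
  - apply eval_cst.
  - rewrite nat_rec_S'. rewrite IHn0. cbv beta. rewrite eval_comp. cbn [map eval nth]. rewrite eval_sh, HP, eval_or by auto. reflexivity.
Qed.
Lemma eval_enc : eval (encp n B P) v = enc (eval B v) f.
Proof.
  unfold encp. rewrite eval_loop by auto. induction (eval B v).
  - apply eval_cst.
  - rewrite nat_rec_S'. rewrite IHn0. cbv beta. rewrite eval_comp. cbn [map eval nth].
    rewrite eval_sh, HP, eval_pow2, eval_mul, eval_add by auto. reflexivity.
Qed.
Lemma eval_last : eval (lastp n B P) v = lastf (eval B v) f.
Proof.
  unfold lastp. rewrite eval_loop by auto. induction (eval B v).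
  - apply eval_cst.
  - rewrite nat_rec_S'. rewrite IHn0. cbv beta. rewrite eval_comp. cbn [map eval nth].
    rewrite eval_sh, HP, eval_cond by auto. cbn [lastf]. destruct (f n0); reflexivity.
Qed.
End Comb.
Global Opaque bforp bexp encp lastp.

Lemma tb_add a b n m : a < 2 ^ n ->
  Nat.testbit (a + 2 ^ n * b) m = if m <? n then Nat.testbit a m else Nat.testbit b (m - n).
Proof.
  intros Ha. assert (Hp : 2 ^ n <> 0) by (apply Nat.pow_nonzero; lia).
  destruct (Nat.ltb_spec m n).
  - rewrite <- (Nat.mod_pow2_bits_low _ n m) by auto.
    rewrite Nat.mul_comm, Nat.Div0.mod_add, Nat.mod_small by auto.
    reflexivity.
  - replace m with ((m - n) + n) at 1 by lia.
    rewrite <- Nat.div_pow2_bits. rewrite Nat.mul_comm, Nat.div_add by auto.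
    rewrite Nat.div_small by auto. reflexivity.
Qed.

Lemma tb_b2n x k : Nat.testbit (Nat.b2n x) k = (k =? 0) && x.
Proof. destruct x, k; simpl; auto; destruct k; auto; apply Nat.bits_0. Qed.

Lemma enc_lt n f : enc n f < 2 ^ n.
Proof.
  induction n; simpl; auto. destruct (f n); simpl; lia.
Qed.
Lemma enc_tb n f m : Nat.testbit (enc n f) m = (m <? n) && f m.
Proof.
  induction n; simpl.
  - destruct m; [reflexivity | apply Nat.bits_0].
  - rewrite tb_add by apply enc_lt. rewrite IHn, tb_b2n.
    destruct (Nat.ltb_spec m n), (Nat.ltb_spec m (S n)), (Nat.eqb_spec (m - n) 0); simpl; auto; try lia.
    replace m with n by lia. destruct (f n); auto.
Qed.

Lemma bfa_spec n f : bfa n f = true <-> (forall i, i < n -> f i = true).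
Proof.
  induction n; simpl. split; auto; intros; lia.
  rewrite andb_true_iff, IHn. split.
  - intros [H1 H2] i Hi. destruct (Nat.eq_dec i n). subst; auto. apply H1; lia.
  - intros H. split; auto.
Qed.
Lemma bex_spec n f : bex n f = true <-> (exists i, i < n /\ f i = true).
Proof.
  induction n; simpl. split. discriminate. intros [i [Hi _]]; lia.
  rewrite orb_true_iff, IHn. split.
  - intros [[i [Hi H]] | H]; eauto.
  - intros [i [Hi H]]. destruct (Nat.eq_dec i n). subst; auto. left; exists i; split; auto; lia.
Qed.
Lemma lastf_lt n f : 0 < n -> lastf n f < n.
Proof.
  induction n; intros H; simpl; [lia|]. destruct (f n); [lia|].
  destruct n; [simpl; lia|]. specialize (IHn ltac:(lia)); lia.
Qed.
Lemma lastf_unique n f y : y < n -> (forall x, x < n -> f x = (x =? y)) -> lastf n f = y.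
Proof.
  induction n; intros Hy Hf; simpl; try lia.
  rewrite Hf by lia. destruct (Nat.eqb_spec n y); auto.
  apply IHn; auto. lia.
Qed.

Definition T s := s * (s + 1) / 2.
Lemma T_S s : T (S s) = T s + S s.
Proof.
  unfold T. replace (S s * (S s + 1)) with (s * (s + 1) + (S s) * 2) by lia.
  rewrite Nat.div_add by lia. reflexivity.
Qed.
Lemma T_mono s s' : s <= s' -> T s <= T s'.
Proof. induction 1; auto. rewrite T_S. lia. Qed.
Lemma T_ge s : s <= T s.
Proof. induction s. unfold T; simpl; lia. rewrite T_S. lia. Qed.
Lemma T_unique n s s' : T s <= n < T (S s) -> T s' <= n < T (S s') -> s = s'.
Proof.
  intros H1 H2. destruct (Nat.lt_trichotomy s s') as [H|[H|H]]; auto.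
  - assert (T (S s) <= T s') by (apply T_mono; lia). lia.
  - assert (T (S s') <= T s) by (apply T_mono; lia). lia.
Qed.
Lemma pair_T a b : pair a b = T (a + b) + b.
Proof. reflexivity. Qed.
Lemma pair_ge a b : a + b <= pair a b.
Proof. rewrite pair_T. pose proof (T_ge (a + b)). lia. Qed.

Fixpoint troot n := match n with 0 => 0 | S k => if T (S (troot k)) <=? S k then S (troot k) else troot k end.
Lemma troot_spec n : T (troot n) <= n < T (S (troot n)).
Proof.
  induction n; simpl. unfold T; simpl; lia.
  destruct (Nat.leb_spec (T (S (troot n))) (S n)).
  - rewrite (T_S (S (troot n))). lia.
  - lia.
Qed.
Definition psnd n := n - T (troot n).
Definition pfst n := troot n - psnd n.
Lemma troot_pair a b : troot (pair a b) = a + b.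
Proof.
  apply (T_unique (pair a b)). apply troot_spec. rewrite pair_T, T_S. lia.
Qed.
Lemma psnd_pair a b : psnd (pair a b) = b.
Proof. unfold psnd. rewrite troot_pair, pair_T. lia. Qed.
Lemma pfst_pair a b : pfst (pair a b) = a.
Proof. unfold pfst. rewrite psnd_pair, troot_pair. lia. Qed.

Definition succp g := RComp RSucc [g].
Lemma eval_succ g v : eval (succp g) v = S (eval g v).
Proof. reflexivity. Qed.
Definition Tp := RComp div2p [RComp mulp [RProj 0; succp (RProj 0)]].
Lemma eval_T s : eval Tp [s] = T s.
Proof.
  unfold Tp. cbn [map eval nth hd].
  rewrite eval_mul, eval_div2, Nat.div2_div. unfold T. rewrite eval_succ. cbn [eval nth]. replace (s * (s+1)) with (s * S s) by lia. reflexivity.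
Qed.
Global Opaque Tp.
Definition trootp := RPrec RZero (RComp condp [RComp subp [RComp Tp [succp (RProj 1)]; succp (RProj 0)]; succp (RProj 1); RProj 1]).
Lemma eval_troot n : eval trootp [n] = troot n.
Proof.
  induction n; auto.
  change (eval trootp [S n]) with (eval (RComp condp [RComp subp [RComp Tp [succp (RProj 1)]; succp (RProj 0)]; succp (RProj 1); RProj 1]) [n; eval trootp [n]]).
  rewrite IHn. cbn [eval map nth hd]. rewrite !eval_succ. cbn [eval nth]. rewrite eval_T, eval_sub, eval_cond. simpl troot.
  destruct (Nat.leb_spec (T (S (troot n))) (S n)).
  - replace (T (S (troot n)) - S n) with 0 by lia. reflexivity.
  - destruct (T (S (troot n)) - S n) eqn:E; [lia|reflexivity].
Qed.
Global Opaque trootp.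
Definition sndp := RComp subp [RProj 0; RComp Tp [RComp trootp [RProj 0]]].
Lemma eval_snd n : eval sndp [n] = psnd n.
Proof. unfold sndp. cbn [eval map nth]. rewrite eval_troot, eval_T, eval_sub. reflexivity. Qed.
Global Opaque sndp.
Definition fstp := RComp subp [RComp trootp [RProj 0]; RComp sndp [RProj 0]].
Lemma eval_fst n : eval fstp [n] = pfst n.
Proof. unfold fstp. cbn [eval map nth]. rewrite eval_troot, eval_snd, eval_sub. reflexivity. Qed.
Global Opaque fstp.

Notation "# i" := (RProj i) (at level 0, i at level 0).

Definition leqp := RComp condp [RComp subp [#0; #1]; cst 1; cst 0].
Lemma eval_leq a b : eval leqp [a; b] = Nat.b2n (a <=? b).
Proof.
  unfold leqp. cbn [eval map nth]. rewrite eval_sub, !eval_cst, eval_cond.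
  destruct (Nat.leb_spec a b). replace (a - b) with 0 by lia; auto.
  destruct (a - b) eqn:E; [lia|auto].
Qed.
Global Opaque leqp.
Definition eqp := RComp mulp [RComp leqp [#0; #1]; RComp leqp [#1; #0]].
Lemma eval_eq a b : eval eqp [a; b] = Nat.b2n (a =? b).
Proof.
  unfold eqp. cbn [eval map nth]. rewrite !eval_leq, eval_mul.
  destruct (Nat.leb_spec a b), (Nat.leb_spec b a), (Nat.eqb_spec a b); simpl; auto; lia.
Qed.
Global Opaque eqp.
Definition notp := RComp subp [cst 1; #0].
Lemma eval_not x : eval notp [Nat.b2n x] = Nat.b2n (negb x).
Proof. unfold notp. cbn [eval map nth]. rewrite eval_cst, eval_sub. destruct x; reflexivity. Qed.
Global Opaque notp.
Lemma eval_and x y : eval mulp [Nat.b2n x; Nat.b2n y] = Nat.b2n (x && y).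
Proof. rewrite eval_mul. destruct x, y; reflexivity. Qed.

Definition idx A N X := RComp addp [RComp mulp [A; N]; X].
Lemma eval_idx A N X v : eval (idx A N X) v = eval A v * eval N v + eval X v.
Proof. unfold idx. cbn [eval map]. rewrite eval_mul, eval_add. reflexivity. Qed.
Global Opaque idx.
Definition tbq H I := RComp tbp [H; I].
Lemma eval_tbq H I v : eval (tbq H I) v = Nat.b2n (Nat.testbit (eval H v) (eval I v)).
Proof. unfold tbq. cbn [eval map]. apply eval_tb. Qed.
Global Opaque tbq.

Definition nomf N t i := lastf N (fun x => Nat.testbit t (i * N + x)).
Definition nomp := lastp 3 #0 (tbq #2 (idx #3 #1 #0)).
Lemma eval_nom N t i : eval nomp [N; t; i] = nomf N t i.
Proof.
  unfold nomp. rewrite (eval_last 3 _ _ _ (fun x => Nat.testbit t (i * N + x))); auto.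
  intros k. rewrite eval_tbq, eval_idx. reflexivity.
Qed.
Global Opaque nomp.

Definition Fv N r s t (k x H : nat) : bool :=
  let a := psnd k in
  match pfst k with
  | 0 => Nat.testbit s (a * N + x)
  | 1 => x =? nomf N t a
  | 2 => negb (Nat.testbit H (a * N + x))
  | 3 => Nat.testbit H (pfst a * N + x) && Nat.testbit H (psnd a * N + x)
  | 4 => bex N (fun y => Nat.testbit r (x * N + y) && Nat.testbit H (a * N + y))
  | 5 => Nat.testbit H (psnd a * N + nomf N t (pfst a))
  | _ => false
  end.

Definition subc g i := RComp subp [g; cst i].
Definition Fp :=
  let A := RComp sndp [#1] in
  let TG := RComp fstp [#1] in
  let v0 := tbq #6 (idx A #4 #0) in
  let v1 := RComp eqp [#0; RComp nomp [#4; #7; A]] in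
  let v2 := RComp notp [tbq #2 (idx A #4 #0)] in
  let v3 := RComp mulp [tbq #2 (idx (RComp fstp [A]) #4 #0); tbq #2 (idx (RComp sndp [A]) #4 #0)] in
  let v4 := bexp 8 #4 (RComp mulp [tbq #6 (idx #1 #5 #0); tbq #3 (idx (RComp sndp [#2]) #5 #0)]) in
  let v5 := tbq #2 (idx (RComp sndp [A]) #4 (RComp nomp [#4; #7; RComp fstp [A]])) in
  RComp condp [TG; v0; RComp condp [subc TG 1; v1; RComp condp [subc TG 2; v2;
    RComp condp [subc TG 3; v3; RComp condp [subc TG 4; v4;
    RComp condp [subc TG 5; v5; cst 0]]]]]].

Lemma eval_F x k H c N r s t : eval Fp [x; k; H; c; N; r; s; t] = Nat.b2n (Fv N r s t k x H).
Proof.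
  unfold Fp, subc. cbn [eval map nth].
  rewrite (eval_bex 8 _ _ _ (fun y => Nat.testbit r (x * N + y) && Nat.testbit H (psnd k * N + y))); auto.
  2:{ intros y. cbn [eval map nth]. rewrite !eval_tbq, !eval_idx. cbn [eval map nth].
      rewrite eval_snd, eval_and. reflexivity. }
  rewrite !eval_tbq, !eval_idx. cbn [eval map nth].
  rewrite !eval_snd, !eval_fst, !eval_cst, !eval_nom, eval_eq, eval_not.
  rewrite ?eval_snd, eval_and, !eval_sub.
  unfold Fv. cbv zeta.
  destruct (pfst k) as [|[|[|[|[|[|m]]]]]]; simpl Nat.sub; repeat (rewrite eval_cond; cbv iota); try reflexivity.
Qed.
Global Opaque Fp.

Fixpoint Hs N r s t k := match k with
  | 0 => 0
  | S k => Hs N r s t k + 2 ^ (k * N) * enc N (fun x => Fv N r s t k x (Hs N r s t k)) end.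

Definition Hp := loop 5 (succp #0) (cst 0)
  (RComp addp [#1; RComp mulp [RComp pow2p [RComp mulp [#0; #3]]; encp 7 #3 Fp]]).
Lemma eval_H c N r s t : eval Hp [c; N; r; s; t] = Hs N r s t (S c).
Proof.
  unfold Hp. rewrite eval_loop by reflexivity. rewrite eval_succ. cbn [eval nth].
  generalize (S c) as m. induction m. apply eval_cst.
  rewrite nat_rec_S', IHm. cbv beta. cbn [eval map nth].
  rewrite (eval_enc 7 _ _ _ (fun x => Fv N r s t m x (Hs N r s t m))); auto.
  2:{ intros x. apply eval_F. }
  cbn [eval nth]. rewrite eval_mul, eval_pow2, eval_mul, eval_add. reflexivity.
Qed.
Global Opaque Hp.

Definition irrs N r := bfa N (fun x => negb (Nat.testbit r (x * N + x))).
Definition syms N r := bfa N (fun x => bfa N (fun y => implb (Nat.testbit r (x * N + y)) (Nat.testbit r (y * N + x)))).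
Definition Gs c N r s t := negb (irrs N r && syms N r) || bfa N (fun x => Nat.testbit (Hs N r s t (S c)) (c * N + x)).

Definition Gp' :=
  let irr := bforp 6 #1 (RComp notp [tbq #3 (idx #0 #2 #0)]) in
  let sym := bforp 6 #1 (bforp 7 #2 (RComp orp [RComp notp [tbq #4 (idx #1 #3 #0)]; tbq #4 (idx #0 #3 #1)])) in
  let tr := bforp 6 #1 (tbq #6 (idx #1 #2 #0)) in
  RComp orp [RComp notp [RComp mulp [irr; sym]]; tr].
Definition Gp := RComp Gp' [#0; #1; #2; #3; #4; Hp].
Lemma eval_G c N r s t : eval Gp [c; N; r; s; t] = Nat.b2n (Gs c N r s t).
Proof.
  unfold Gp, Gp'. cbn [eval map nth]. rewrite eval_H.
  rewrite (eval_bfor 6 _ _ _ (fun x => negb (Nat.testbit r (x * N + x)))); auto.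
  2:{ intros x. cbn [eval map nth]. rewrite eval_tbq, eval_idx, eval_not. reflexivity. }
  rewrite (eval_bfor 6 _ _ _ (fun x => bfa N (fun y => implb (Nat.testbit r (x * N + y)) (Nat.testbit r (y * N + x))))); auto.
  2:{ intros x. rewrite (eval_bfor 7 _ _ _ (fun y => implb (Nat.testbit r (x * N + y)) (Nat.testbit r (y * N + x)))); auto.
      intros y. cbn [eval map nth]. rewrite !eval_tbq, !eval_idx, eval_not. cbn [eval nth].
      rewrite eval_or. destruct (Nat.testbit r (x * N + y)); reflexivity. }
  rewrite (eval_bfor 6 _ _ _ (fun x => Nat.testbit (Hs N r s t (S c)) (c * N + x))); auto.
  2:{ intros x. rewrite eval_tbq, eval_idx. reflexivity. }
  cbn [eval nth]. rewrite eval_and, eval_not, eval_or. reflexivity.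
Qed.
Global Opaque Gp.

Definition Qs c := let N := 2 ^ (c + 2) in
  bfa (2 ^ (N * N)) (fun r => bfa (2 ^ (S c * N)) (fun s => bfa (2 ^ (S c * N)) (fun t => Gs c N r s t))).
Definition Qp := bforp 2 (RComp pow2p [RComp mulp [#1; #1]])
  (bforp 3 (RComp pow2p [RComp mulp [succp #1; #2]])
  (bforp 4 (RComp pow2p [RComp mulp [succp #2; #3]]) (RComp Gp [#3; #4; #2; #1; #0]))).
Definition Top := RComp notp [RComp Qp [#0; RComp pow2p [RComp addp [#0; cst 2]]]].
Lemma eval_Top c : eval Top [c] = Nat.b2n (negb (Qs c)).
Proof.
  unfold Top, Qp. cbn [eval map nth]. rewrite eval_cst, eval_add, eval_pow2.
  set (N := 2 ^ (c + 2)).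
  rewrite (eval_bfor 2 _ _ _ (fun r => bfa (2 ^ (S c * N)) (fun s => bfa (2 ^ (S c * N)) (fun t => Gs c N r s t)))); auto.
  2:{ intros r. rewrite (eval_bfor 3 _ _ _ (fun s => bfa (2 ^ (S c * N)) (fun t => Gs c N r s t))); auto.
      2:{ intros s. rewrite (eval_bfor 4 _ _ _ (fun t => Gs c N r s t)); auto.
          2:{ intros t. cbn [eval map nth]. apply eval_G. }
          cbn [eval map nth]. rewrite eval_succ, eval_mul, eval_pow2. reflexivity. }
      cbn [eval map nth]. rewrite eval_succ, eval_mul, eval_pow2. reflexivity. }
  cbn [eval map nth]. rewrite eval_mul, eval_pow2, eval_not. reflexivity.
Qed.

Lemma ok_Top : okb Top 1 = true.
Proof. vm_compute. reflexivity. Qed.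

Section Dec.
Variables (N r s t : nat).
Hypothesis HN : 0 < N.

Lemma Hs_lt k : Hs N r s t k < 2 ^ (k * N).
Proof.
  induction k; simpl. lia.
  pose proof (enc_lt N (fun x => Fv N r s t k x (Hs N r s t k))) as He.
  set (e := enc _ _) in *. set (h := Hs N r s t k) in *.
  replace (N + k * N) with (k * N + N) by lia. rewrite Nat.pow_add_r.
  assert (2 ^ (k * N) * e <= 2 ^ (k * N) * (2 ^ N - 1)) by (apply Nat.mul_le_mono_l; lia).
  rewrite Nat.mul_sub_distr_l in H. nia.
Qed.

Lemma Hs_bit k j x : j < k -> x < N ->
  Nat.testbit (Hs N r s t k) (j * N + x) = Fv N r s t j x (Hs N r s t j).
Proof.
  intros Hj Hx. induction k. lia. simpl.
  rewrite tb_add by apply Hs_lt.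
  destruct (Nat.ltb_spec (j * N + x) (k * N)).
  - apply IHk. destruct (Nat.lt_ge_cases j k); auto. nia.
  - assert (j = k) by (destruct (Nat.lt_ge_cases j k); nia). subst j.
    rewrite enc_tb. replace (k * N + x - k * N) with x by lia.
    destruct (Nat.ltb_spec x N); [reflexivity | lia].
Qed.

Definition dR x y := x < N /\ y < N /\ Nat.testbit r (x * N + y) = true.
Definition dV p x := Nat.testbit s (p * N + x) = true.
Definition dN i := nomf N t i.

Lemma code_lt_neg a : code a < code (Neg a).
Proof. simpl. pose proof (pair_ge 2 (code a)). lia. Qed.

Lemma truth psi : forall k x, code psi < k -> x < N ->
  (Nat.testbit (Hs N r s t k) (code psi * N + x) = true <-> sat dR dV dN x psi).
Proof.
  induction psi; intros k x Hk Hx; rewrite Hs_bit by auto; unfold Fv; simpl code.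
  - rewrite pfst_pair, psnd_pair. reflexivity.
  - rewrite pfst_pair, psnd_pair. simpl. rewrite Nat.eqb_eq. reflexivity.
  - rewrite pfst_pair, psnd_pair. simpl sat. rewrite negb_true_iff.
    pose proof (pair_ge 2 (code psi)).
    rewrite <- (IHpsi (pair 2 (code psi)) x) by (auto; lia). rewrite <- not_true_iff_false. tauto.
  - rewrite pfst_pair, psnd_pair, pfst_pair, psnd_pair. simpl sat. rewrite andb_true_iff.
    pose proof (pair_ge 3 (pair (code psi1) (code psi2))). pose proof (pair_ge (code psi1) (code psi2)).
    rewrite <- (IHpsi1 (pair 3 (pair (code psi1) (code psi2))) x) by (auto; lia).
    rewrite <- (IHpsi2 (pair 3 (pair (code psi1) (code psi2))) x) by (auto; lia). tauto.
  - rewrite pfst_pair, psnd_pair. simpl sat. rewrite bex_spec.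
    pose proof (pair_ge 4 (code psi)). split.
    + intros [y [Hy E]]. apply andb_true_iff in E as [E1 E2]. exists y. split.
      * unfold dR. auto.
      * apply (IHpsi (pair 4 (code psi))); auto. lia.
    + intros [y [[_ [Hy E1]] E2]]. exists y. split; auto. apply andb_true_iff. split; auto.
      apply (IHpsi (pair 4 (code psi))); auto. lia.
  - rewrite pfst_pair, psnd_pair, pfst_pair, psnd_pair. simpl sat.
    pose proof (pair_ge 5 (pair n (code psi))). pose proof (pair_ge n (code psi)).
    apply IHpsi. lia. apply lastf_lt. auto.
Qed.

Lemma dec_ortho : irrs N r && syms N r = true -> orthoframe dR.
Proof.
  intros E. apply andb_true_iff in E as [E1 E2]. unfold irrs, syms in *.
  rewrite bfa_spec in E1, E2. split.
  - intros w [Hw [_ Hb]]. specialize (E1 w Hw). rewrite Hb in E1. discriminate.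
  - intros w v [Hw [Hv Hb]]. specialize (E2 w Hw). rewrite bfa_spec in E2.
    specialize (E2 v Hv). rewrite Hb in E2. simpl in E2. unfold dR. auto.
Qed.
End Dec.

Lemma valid_Qs phi : IB_valid phi -> Qs (code phi) = true.
Proof.
  intros Hv. unfold Qs. set (c := code phi). set (N := 2 ^ (c + 2)).
  assert (HN : 0 < N) by (apply Nat.neq_0_lt_0, Nat.pow_nonzero; lia).
  apply bfa_spec. intros r _. apply bfa_spec. intros s _. apply bfa_spec. intros t _.
  unfold Gs. destruct (irrs N r && syms N r) eqn:E; cbn [negb orb]; auto.
  apply bfa_spec. intros x Hx.
  apply (proj2 (truth N r s t HN phi (S c) x ltac:(lia) Hx)).
  apply Hv. apply dec_ortho; auto.
Qed.

Definition sb (P : Prop) : bool := if excluded_middle_informative P then true else false.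
Lemma sb_true P : sb P = true <-> P.
Proof. unfold sb. destruct (excluded_middle_informative P); split; auto; discriminate. Qed.

Lemma mk2 b e : Nat.div2 (2 * b + Nat.b2n e) = b /\ Nat.odd (2 * b + Nat.b2n e) = e.
Proof.
  destruct e; simpl Nat.b2n.
  - split. apply Nat.div2_odd'. apply Nat.odd_odd.
  - rewrite Nat.add_0_r. split. apply Nat.div2_double. apply Nat.odd_even.
Qed.

Fixpoint sub (f : form) : list form :=
  match f with
  | PVar p => [PVar p]
  | Nom i => [Nom i]
  | Neg a => Neg a :: sub a
  | And a b => And a b :: sub a ++ sub b
  | Dia a => Dia a :: sub a
  | At i a => At i a :: Nom i :: sub a
  end.

Lemma sub_self f : In f (sub f).
Proof. destruct f; simpl; auto. Qed.
Lemma sub_trans f g : In g (sub f) -> incl (sub g) (sub f).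
Proof.
  induction f; simpl; intros H; destruct H as [<-|H]; try (apply incl_refl).
  - contradiction.
  - contradiction.
  - apply incl_tl. auto.
  - apply incl_tl. apply in_app_or in H as [H|H].
    + apply incl_appl. auto.
    + apply incl_appr. auto.
  - apply incl_tl. auto.
  - destruct H as [<-|H].
    + simpl. intros x [<-|[]]. right; left; auto.
    + apply incl_tl, incl_tl. auto.
Qed.
Lemma sub_len f : length (sub f) <= code f + 1.
Proof.
  induction f; simpl code; simpl sub; cbn [length]; try rewrite length_app.
  - lia.
  - pose proof (pair_ge 1 n). lia.
  - pose proof (pair_ge 2 (code f)). lia.
  - pose proof (pair_ge 3 (pair (code f1) (code f2))). pose proof (pair_ge (code f1) (code f2)). lia.
  - pose proof (pair_ge 4 (code f)). lia.
  - pose proof (pair_ge 5 (pair n (code f))). pose proof (pair_ge n (code f)). lia.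
Qed.

Fixpoint bnd c (f : form) : Prop :=
  match f with
  | PVar p => p <= c
  | Nom i => i <= c
  | Neg a => bnd c a
  | And a b => bnd c a /\ bnd c b
  | Dia a => bnd c a
  | At i a => i <= c /\ bnd c a
  end.
Lemma bnd_code f : forall c, code f <= c -> bnd c f.
Proof.
  induction f; simpl code; simpl bnd; intros c Hc.
  - pose proof (pair_ge 0 n). lia.
  - pose proof (pair_ge 1 n). lia.
  - pose proof (pair_ge 2 (code f)). apply IHf. lia.
  - pose proof (pair_ge 3 (pair (code f1) (code f2))). pose proof (pair_ge (code f1) (code f2)).
    split; [apply IHf1|apply IHf2]; lia.
  - pose proof (pair_ge 4 (code f)). apply IHf. lia.
  - pose proof (pair_ge 5 (pair n (code f))). pose proof (pair_ge n (code f)).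
    split; [lia|apply IHf; lia].
Qed.

Lemma agree (R1 R2 : nat -> nat -> Prop) V1 V2 N1 N2 c N :
  (forall x y, R1 x y <-> R2 x y) ->
  (forall x y, R2 x y -> y < N) ->
  (forall p x, p <= c -> x < N -> (V1 p x <-> V2 p x)) ->
  (forall i, i <= c -> N1 i = N2 i /\ N2 i < N) ->
  forall f x, bnd c f -> x < N -> (sat R1 V1 N1 x f <-> sat R2 V2 N2 x f).
Proof.
  intros HR HRN HV HNm f. induction f; simpl; intros x Hb Hx.
  - apply HV; auto.
  - destruct (HNm n Hb) as [-> _]. tauto.
  - rewrite IHf; tauto.
  - rewrite IHf1, IHf2; tauto.
  - split; intros [y [Hr Hs]]; exists y.
    + apply HR in Hr. split; auto. apply IHf; eauto.
    + split. apply HR; auto. apply IHf; eauto.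
  - destruct Hb as [Hi Hb]. destruct (HNm n Hi) as [-> Hlt]. apply IHf; auto.
Qed.

Lemma divmod_idx x y N : y < N -> (x * N + y) / N = x /\ (x * N + y) mod N = y.
Proof.
  intros Hy. split.
  - rewrite Nat.div_add_l by lia. rewrite Nat.div_small by auto. lia.
  - rewrite Nat.add_comm, Nat.Div0.mod_add. apply Nat.mod_small; auto.
Qed.

Lemma encode (R' : nat -> nat -> Prop) (V' : nat -> nat -> Prop) (Nm' : nat -> nat) c N :
  0 < N -> (forall x y, R' x y -> x < N /\ y < N) -> (forall i, Nm' i < N) ->
  exists r s t, r < 2 ^ (N * N) /\ s < 2 ^ (S c * N) /\ t < 2 ^ (S c * N) /\
    (forall x y, dR N r x y <-> R' x y) /\
    (forall p x, p <= c -> x < N -> (dV N s p x <-> V' p x)) /\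
    (forall i, i <= c -> dN N t i = Nm' i).
Proof.
  intros HN HR HNm.
  exists (enc (N * N) (fun j => sb (R' (j / N) (j mod N)))),
         (enc (S c * N) (fun j => sb (V' (j / N) (j mod N)))),
         (enc (S c * N) (fun j => j mod N =? Nm' (j / N))).
  split; [apply enc_lt|]. split; [apply enc_lt|]. split; [apply enc_lt|].
  split; [|split].
  - intros x y. unfold dR. rewrite enc_tb. split.
    + intros [Hx [Hy E]]. apply andb_true_iff in E as [_ E].
      destruct (divmod_idx x y N Hy) as [E1 E2]. rewrite E1, E2 in E. apply (proj1 (sb_true _)) in E. auto.
    + intros H. destruct (HR x y H) as [Hx Hy]. split; auto. split; auto.
      apply andb_true_iff. split. apply Nat.ltb_lt. nia.
      destruct (divmod_idx x y N Hy) as [E1 E2]. rewrite E1, E2. apply sb_true. auto.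
  - intros p x Hp Hx. unfold dV. rewrite enc_tb.
    destruct (divmod_idx p x N Hx) as [E1 E2]. rewrite E1, E2.
    assert (p * N + x < S c * N) by nia. apply Nat.ltb_lt in H. rewrite H. simpl. apply sb_true.
  - intros i Hi. unfold dN, nomf. apply lastf_unique. apply HNm.
    intros x Hx. rewrite enc_tb.
    destruct (divmod_idx i x N Hx) as [E1 E2]. rewrite E1, E2.
    assert (i * N + x < S c * N) by nia. apply Nat.ltb_lt in H. rewrite H. reflexivity.
Qed.

Section FMP.
Variables (W : Type) (R : W -> W -> Prop) (V : nat -> W -> Prop) (Nm : nat -> W) (phi : form).
Hypothesis Ho : orthoframe R.

Definition SS := sub phi.
Definition mm := length SS.
Definition cls (u : W) := enc mm (fun j => sb (sat R V Nm u (nth j SS (PVar 0)))).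

Lemma cls_lt u : cls u < 2 ^ mm.
Proof. apply enc_lt. Qed.

Lemma cls_eq u u' psi : cls u = cls u' -> In psi SS -> (sat R V Nm u psi <-> sat R V Nm u' psi).
Proof.
  intros E Hin. apply (In_nth _ _ (PVar 0)) in Hin as [j [Hj Ej]].
  assert (Nat.testbit (cls u) j = Nat.testbit (cls u') j) by now rewrite E.
  unfold cls in H. rewrite !enc_tb in H. unfold mm in H.
  apply Nat.ltb_lt in Hj. rewrite Hj in H. simpl in H. rewrite Ej in H.
  split; intros Hs; apply (proj1 (sb_true _)); [rewrite <- H | rewrite H]; apply sb_true; auto.
Qed.

Lemma in_sub_sub psi a : In psi SS -> In a (sub psi) -> In a SS.
Proof. intros H1 H2. apply (sub_trans phi psi); auto. Qed.

Definition named a := exists i, In (Nom i) SS /\ cls (Nm i) = a.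
Definition used z := (exists u, cls u = Nat.div2 z) /\ (Nat.odd z = true -> ~ named (Nat.div2 z)).
Definition Rmin a b := exists u v, cls u = a /\ cls v = b /\ R u v.
Definition R' z z' := used z /\ used z' /\ Rmin (Nat.div2 z) (Nat.div2 z') /\
  (named (Nat.div2 z) \/ named (Nat.div2 z') \/ Nat.odd z <> Nat.odd z').
Definition V' p z := exists u, cls u = Nat.div2 z /\ V p u.
Definition Nm' i := 2 * cls (Nm i).

Lemma used_even u : used (2 * cls u).
Proof.
  destruct (mk2 (cls u) false) as [E1 E2]. simpl Nat.b2n in *. rewrite Nat.add_0_r in *.
  split. exists u; auto. rewrite E2. discriminate.
Qed.

Lemma named_unique i u : In (Nom i) SS -> cls u = cls (Nm i) -> u = Nm i.
Proof.
  intros Hin E. apply (cls_eq _ _ _ E Hin). reflexivity.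
Qed.

Lemma R'_ortho : orthoframe R'.
Proof.
  destruct Ho as [Hirr Hsym]. split.
  - intros z [_ [_ [[u [v [Eu [Ev Ruv]]]] Hd]]].
    destruct Hd as [Hn | [Hn | Hn]]; [| | apply Hn; auto].
    all: destruct Hn as [i [Hin Ei]];
      rewrite <- Ei in Eu, Ev; apply named_unique in Eu; apply named_unique in Ev; auto;
      subst; apply (Hirr (Nm i)); auto.
  - intros z z' [H1 [H2 [[u [v [Eu [Ev Ruv]]]] Hd]]]. split; auto. split; auto. split.
    + exists v, u. auto.
    + destruct Hd as [Hd|[Hd|Hd]]; auto.
Qed.

Lemma used_lt z : used z -> z < 2 ^ (S mm).
Proof.
  intros [[u Eu] _]. pose proof (cls_lt u). rewrite (Nat.div2_odd z).
  rewrite Eu in H. simpl. destruct (Nat.odd z); simpl; lia.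
Qed.

Lemma fmp_truth psi : In psi SS -> forall z u, used z -> cls u = Nat.div2 z ->
  (sat R' V' Nm' z psi <-> sat R V Nm u psi).
Proof.
  induction psi; intros Hin z u Hz Eu; simpl sat.
  - split.
    + intros [u' [E' Hv]]. apply (cls_eq u' u (PVar n)); auto. simpl. congruence.
    + intros Hv. exists u. auto.
  - unfold Nm'. split.
    + intros ->. destruct (mk2 (cls (Nm n)) false) as [E1 _]. simpl Nat.b2n in E1.
      rewrite Nat.add_0_r in E1. rewrite E1 in Eu. apply named_unique; auto.
    + intros ->. destruct Hz as [_ Hz].
      assert (Hodd : Nat.odd z = false).
      { destruct (Nat.odd z) eqn:E; auto. exfalso. apply (Hz eq_refl). exists n. auto. }
      rewrite (Nat.div2_odd z), Hodd. simpl Nat.b2n. rewrite Eu. lia.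
  - assert (In psi SS) by (apply (in_sub_sub _ _ Hin); simpl; right; apply sub_self).
    rewrite (IHpsi H z u Hz Eu). tauto.
  - assert (In psi1 SS) by (apply (in_sub_sub _ _ Hin); simpl; right; apply in_or_app; left; apply sub_self).
    assert (In psi2 SS) by (apply (in_sub_sub _ _ Hin); simpl; right; apply in_or_app; right; apply sub_self).
    rewrite (IHpsi1 H z u Hz Eu), (IHpsi2 H0 z u Hz Eu). tauto.
  - assert (Ha : In psi SS) by (apply (in_sub_sub _ _ Hin); simpl; right; apply sub_self).
    split.
    + intros [z' [[_ [Hz' [[u1 [v1 [Eu1 [Ev1 Ruv]]]] _]]] Hs]].
      destruct Hz' as [[u' Eu'] Hz'2].
      assert (Hv1 : sat R V Nm v1 psi).
      { apply (cls_eq u' v1); auto. congruence. apply (IHpsi Ha z' u'); auto. split; eauto. }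
      apply (cls_eq u1 u (Dia psi)); auto. congruence. simpl. eauto.
    + intros [v [Ruv Hv]].
      set (b := cls v).
      destruct (classic (named b \/ named (Nat.div2 z))) as [Hn | Hn].
      * exists (2 * b + Nat.b2n false). destruct (mk2 b false) as [E1 E2].
        assert (Hu' : used (2 * b + Nat.b2n false)).
        { split. exists v. rewrite E1. reflexivity. rewrite E2. discriminate. }
        split.
        -- split; auto. split; auto. split.
           ++ rewrite E1. exists u, v. auto.
           ++ rewrite E1. tauto.
        -- apply (IHpsi Ha _ v); auto; rewrite E1; reflexivity.
      * set (e := negb (Nat.odd z)).
        exists (2 * b + Nat.b2n e). destruct (mk2 b e) as [E1 E2].
        assert (Hu' : used (2 * b + Nat.b2n e)).
        { split. exists v. rewrite E1. reflexivity. rewrite E2, E1. intros _ Hb. apply Hn. auto. }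
        split.
        -- split; auto. split; auto. split.
           ++ rewrite E1. exists u, v. auto.
           ++ right; right. rewrite E2. unfold e. destruct (Nat.odd z); discriminate.
        -- apply (IHpsi Ha _ v); auto; rewrite E1; reflexivity.
  - assert (Ha : In psi SS) by (apply (in_sub_sub _ _ Hin); simpl; right; right; apply sub_self).
    unfold Nm'. apply (IHpsi Ha _ (Nm n)). apply used_even.
    destruct (mk2 (cls (Nm n)) false) as [E1 _]. simpl Nat.b2n in E1. rewrite Nat.add_0_r in E1. auto.
Qed.

End FMP.

Lemma Qs_valid phi : Qs (code phi) = true -> IB_valid phi.
Proof.
  intros HQ W R V Nm Ho w. apply NNPP; intros Hn.
  set (c := code phi) in *. set (N := 2 ^ (c + 2)).
  assert (HN : 0 < N) by (apply Nat.neq_0_lt_0, Nat.pow_nonzero; lia).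
  assert (Hmm : 2 ^ S (mm phi) <= N).
  { unfold N. apply Nat.pow_le_mono_r. lia. pose proof (sub_len phi). unfold mm, SS. lia. }
  set (R2 := R' W R V Nm phi). set (V2 := V' W R V Nm phi). set (N2 := Nm' W R V Nm phi).
  assert (HR2 : forall x y, R2 x y -> x < N /\ y < N).
  { intros x y [Hx [Hy _]]. apply used_lt in Hx, Hy. lia. }
  assert (HN2 : forall i, N2 i < N).
  { intros i. pose proof (used_lt _ _ _ _ _ _ (used_even W R V Nm phi (Nm i))). unfold N2, Nm'. lia. }
  destruct (encode R2 V2 N2 c N HN HR2 HN2) as [r [s [t [Hr [Hs [Ht [ER [EV EN]]]]]]]].
  unfold Qs in HQ. fold N in HQ.
  rewrite bfa_spec in HQ. specialize (HQ r Hr). rewrite bfa_spec in HQ. specialize (HQ s Hs).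
  rewrite bfa_spec in HQ. specialize (HQ t Ht).
  pose proof (R'_ortho W R V Nm phi Ho) as [Hirr Hsym]. fold R2 in Hirr, Hsym.
  assert (Hortho : irrs N r && syms N r = true).
  { apply andb_true_iff. split.
    - apply bfa_spec. intros x Hx. destruct (Nat.testbit r (x * N + x)) eqn:E; auto.
      exfalso. apply (Hirr x). apply ER. unfold dR. auto.
    - apply bfa_spec. intros x Hx. apply bfa_spec. intros y Hy.
      destruct (Nat.testbit r (x * N + y)) eqn:E; auto. simpl.
      assert (dR N r y x) as [_ [_ E']]. { apply ER, Hsym, ER. unfold dR; auto. }
      auto. }
  unfold Gs in HQ. rewrite Hortho in HQ. cbn [negb orb] in HQ. rewrite bfa_spec in HQ.
  set (z0 := 2 * cls W R V Nm phi w).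
  assert (Hz0 : z0 < N).
  { pose proof (used_lt _ _ _ _ _ _ (used_even W R V Nm phi w)). unfold z0. lia. }
  specialize (HQ z0 Hz0).
  apply (truth N r s t HN phi (S c) z0 ltac:(lia) Hz0) in HQ.
  assert (Hsat : sat R2 V2 N2 z0 phi).
  { apply (proj1 (agree (dR N r) R2 (dV N s) V2 (dN N t) N2 c N ER
      ltac:(intros x y Hxy; apply HR2 in Hxy; lia) EV
      ltac:(intros i Hi; split; auto) phi z0 ltac:(apply bnd_code; lia) Hz0)).
    exact HQ. }
  apply Hn. apply (fmp_truth W R V Nm phi phi (sub_self phi) z0 w).
  + apply used_even.
  + unfold z0. destruct (mk2 (cls W R V Nm phi w) false) as [E1 _]. simpl Nat.b2n in E1.
    rewrite Nat.add_0_r in E1. auto.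
  + exact Hsat.
Qed.

Theorem corollary1 : decidable_form_set IB_valid.
Proof.
  exists Top. intros phi.
  pose proof (ok_ev Top [code phi] ok_Top) as Hev. rewrite eval_Top in Hev. split; intros H.
  - rewrite (valid_Qs phi H) in Hev. exact Hev.
  - destruct (Qs (code phi)) eqn:E.
    + exfalso. apply H. apply Qs_valid. auto.
    + exact Hev.
Qed.
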